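(* Let $(G,S,C,\phi_0)$ be a minimal counterexample with outer face $D$ (so $S=V(D)$). If $e=uv$ is an edge of $G$ not in $E(D)$, then $|E(C_{uv})|\ge 2$. Moreover, if $e$ is not contained in a triangle, then $|E(C_{uv})|=3$.
   Context: All graphs are finite and simple. Two cycles are adjacent if they share at least one common edge. A $3$-correspondence assignment for $G$ consists of the list $L(u)=\{1,2,3\}$ for each vertex together with, for each edge $e=uv$, a matching $C_e$ (not necessarily perfect) between $\{u\}\times\{1,2,3\}$ and $\{v\}\times\{1,2,3\}$. A $C$-coloring is a map $\phi$ to $\{1,2,3\}$ with $(u,\phi(u))(v,\phi(v))\notin E(C_{uv})$ for every edge $uv$. For a closed walk $v_1\dots v_m$ ($v_m=v_1$), $C$ is inconsistent on it if there are colors $c_i$ with $(v_i,c_i)(v_{i+1},c_{i+1})\in E(C_{v_iv_{i+1}})$ for all $i\in[m-1]$ and $c_1\ne c_m$. A counterexample is a quadruple $(G,S,C,\phi_0)$ where $G$ is a plane graph with no two adjacent cycles of length at most $8$, $S\subseteq V(G)$ with $|S|\le 12$ is either a single vertex or the vertex set of the boundary of a face, $C$ is a $3$-correspondence assignment consistent on every closed walk of length $3$, and $\phi_0$ is a $C$-coloring of $G[S]$ that does not extend to a $C$-coloring of $G$. A minimal counterexample is a counterexample minimizing $|V(G)|$, subject to that minimizing $|E(G)|-|E(G[S])|$, and subject to both maximizing $\sum_{uv\in E(G)}|E(C_{uv})|$. In a minimal counterexample $S$ is the vertex set of a face, and the embedding is chosen so that this face is the outer face $D$. *)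

(* Defs.v *)
From HB Require Import structures.
From mathcomp Require Import all_boot perm.
Set Implicit Arguments. Unset Strict Implicit. Unset Printing Implicit Defensive.

(* Plane graphs as combinatorial maps (rotation systems) of genus 0.      *)
(* Vertices: finType V.  Darts (half-edges): finType Dt.                  *)
(*   alpha : the dart involution (the two halves of an edge),             *)
(*   sigma : the rotation of darts around their vertex,                   *)
(* Faces are the orbits of the face permutation  d |-> sigma (alpha d).   *)
Record plane_map (V Dt : finType) := PMap {
  pm_alpha : {perm Dt};
  pm_sigma : {perm Dt};
  pm_vert  : Dt -> V
}.

Section PlaneGraph.
Variables (V Dt : finType) (M : plane_map V Dt).

Definition alpha := pm_alpha M.
Definition sigma := pm_sigma M.
Definition vert := pm_vert M.

Definition fperm (d : Dt) : Dt := sigma (alpha d).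

(* the relation generating connected components of the map *)
Definition glink : rel Dt := fun x y => (y == alpha x) || (y == sigma x).

Definition adj : rel V :=
  fun u v => [exists d : Dt, (vert d == u) && (vert (alpha d) == v)].

(* Axioms of a simple plane graph:
   - alpha is a fixed-point-free involution,
   - sigma preserves vertices and acts transitively (cyclically) on the
     darts of each vertex,
   - no loops, no parallel edges,
   - Euler's formula V - E + F = 2 holds for every connected component
     with darts (genus 0), expressed globally as
     2 * (#non-isolated vertices + #faces) = #darts + 4 * #components. *)
Definition is_plane_graph : Prop :=
  [/\ forall d, alpha (alpha d) = d,
      forall d, alpha d != d,
      forall d, vert (sigma d) = vert d,
      forall d d', vert d = vert d' -> fconnect sigma d d' &
      [/\ forall d, vert (alpha d) != vert d,
      forall d d', vert d = vert d' -> vert (alpha d) = vert (alpha d') -> d = d'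
    & 2 * (fcard sigma Dt + fcard fperm Dt) = #|Dt| + 4 * n_comp glink Dt]].

Definition face_verts (d : Dt) : {set V} := [set vert x | x in fconnect fperm d].
Definition face_edges (d : Dt) : {set {set V}} :=
  [set [set vert x; vert (alpha x)] | x in fconnect fperm d].

End PlaneGraph.

Section GraphNotions.
Variables (V : finType) (g : rel V).

Definition edge_set : {set {set V}} :=
  [set [set p.1; p.2] | p in [pred p : V * V | g p.1 p.2]].

Definition induced_edge_set (S : {set V}) : {set {set V}} :=
  [set [set p.1; p.2] | p in [pred p : V * V | [&& g p.1 p.2, p.1 \in S & p.2 \in S]]].

Definition is_graph_cycle (s : seq V) : bool :=
  [&& 3 <= size s, uniq s & cycle g s].

Definition cycle_edges (s : seq V) : {set {set V}} :=
  [set [set p.1; p.2] | p in zip s (rot 1 s)].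

Definition no_adjacent_short_cycles : Prop :=
  forall s1 s2 : seq V,
    is_graph_cycle s1 -> is_graph_cycle s2 ->
    size s1 <= 8 -> size s2 <= 8 ->
    cycle_edges s1 != cycle_edges s2 ->
    cycle_edges s1 :&: cycle_edges s2 = set0.

End GraphNotions.

(* 3-correspondence assignments.  Colours {1,2,3} are 'I_3.               *)
(* C u v c c' means (u,c)(v,c') is an edge of the matching C_{uv}.        *)
Definition corr (V : finType) := V -> V -> 'I_3 -> 'I_3 -> bool.

Section Corr.
Variables (V : finType) (g : rel V) (C : corr V).

(* C_{uv} is a matching between {u}x[3] and {v}x[3], and C_{vu} = C_{uv} *)
Definition is_corr_assignment : Prop :=
  (forall u v c c', C u v c c' = C v u c' c) /\
  (forall u v c c1 c2, C u v c c1 -> C u v c c2 -> c1 = c2).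

Definition corr_size (u v : V) : nat := #|[set p : 'I_3 * 'I_3 | C u v p.1 p.2]|.

(* consistent on every closed walk v1 v2 v3 v4 = v1 of length 3 *)
Definition consistent_on_triangles : Prop :=
  forall (v1 v2 v3 : V) (c1 c2 c3 c4 : 'I_3),
    g v1 v2 -> g v2 v3 -> g v3 v1 ->
    C v1 v2 c1 c2 -> C v2 v3 c2 c3 -> C v3 v1 c3 c4 -> c1 = c4.

Definition is_C_coloring_on (A : {pred V}) (phi : V -> 'I_3) : Prop :=
  forall u v, u \in A -> v \in A -> g u v -> ~~ C u v (phi u) (phi v).

Definition is_C_coloring (phi : V -> 'I_3) : Prop :=
  is_C_coloring_on predT phi.

(* \sum_{uv in E(G)} |E(C_{uv})|  (sum over ordered pairs, halved) *)
Definition corr_weight : nat :=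
  (\sum_(p : V * V | g p.1 p.2) corr_size p.1 p.2) %/ 2.

End Corr.

Definition counterexample (V Dt : finType) (M : plane_map V Dt) (S : {set V})
    (C : corr V) (phi0 : V -> 'I_3) : Prop :=
  [/\ is_plane_graph M,
      no_adjacent_short_cycles (adj M),
      #|S| <= 12 &
      (exists v, S = [set v]) \/ (exists d : Dt, S = face_verts M d)] /\
  [/\ is_corr_assignment C,
      consistent_on_triangles (adj M) C,
      is_C_coloring_on (adj M) C (mem S) phi0
    & ~ exists phi, is_C_coloring (adj M) C phi /\ forall u, u \in S -> phi u = phi0 u].

Definition cx_vertices (V Dt : finType) (M : plane_map V Dt) : nat := #|V|.
Definition cx_edges (V Dt : finType) (M : plane_map V Dt) (S : {set V}) : nat :=
  #|edge_set (adj M)| - #|induced_edge_set (adj M) S|.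

Definition cx_better (V' Dt' : finType) (M' : plane_map V' Dt') (S' : {set V'}) (C' : corr V')
    (V Dt : finType) (M : plane_map V Dt) (S : {set V}) (C : corr V) : Prop :=
  cx_vertices M' < cx_vertices M \/
  (cx_vertices M' = cx_vertices M /\
   (cx_edges M' S' < cx_edges M S \/
    (cx_edges M' S' = cx_edges M S /\
     corr_weight (adj M) C < corr_weight (adj M') C'))).

Definition minimal_counterexample (V Dt : finType) (M : plane_map V Dt) (S : {set V})
    (C : corr V) (phi0 : V -> 'I_3) : Prop :=
  counterexample M S C phi0 /\
  forall (n m : nat) (M' : plane_map 'I_n 'I_m) (S' : {set 'I_n}) (C' : corr 'I_n)
         (phi0' : 'I_n -> 'I_3),
    counterexample M' S' C' phi0' -> ~ cx_better M' S' C' M S C.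

(* Main.v *)
Require Import Defs.
From mathcomp Require Import all_boot perm zify.
From Stdlib Require Import FunctionalExtensionality.
Set Implicit Arguments. Unset Strict Implicit. Unset Printing Implicit Defensive.

Definition o0 : 'I_3 := @Ordinal 3 0 isT.
Definition o1 : 'I_3 := @Ordinal 3 1 isT.
Definition o2 : 'I_3 := @Ordinal 3 2 isT.
Definition ords : seq 'I_3 := [:: o0; o1; o2].
Definition allI (P : 'I_3 -> bool) := all P ords.

Definition R3 := 'I_3 -> 'I_3 -> bool.
Definition mkR (bs : seq bool) : R3 := fun a b => nth false bs (3 * a + b).

Definition matchingb (X : R3) : bool :=
  allI (fun a => allI (fun b1 => allI (fun b2 =>
     if X a b1 then (if X a b2 then b1 == b2 else true) else true))) &&
  allI (fun a => allI (fun b1 => allI (fun b2 =>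
     if X b1 a then (if X b2 a then b1 == b2 else true) else true))).

Definition walkb (A B Cc : R3) : bool :=
  allI (fun c1 => allI (fun c2 => if A c1 c2 then
   allI (fun c3 => if B c2 c3 then allI (fun c4 => if Cc c3 c4 then c1 == c4 else true) else true)
   else true)).

Definition tr (A : R3) : R3 := fun a b => A b a.

Definition consb (X Y Z : R3) : bool :=
  [&& walkb X Y Z, walkb Y Z X, walkb Z X Y, walkb (tr Z) (tr Y) (tr X),
      walkb (tr Y) (tr X) (tr Z) & walkb (tr X) (tr Z) (tr Y)].

Definition pairs3 : seq ('I_3 * 'I_3) := [seq (a, b) | a <- ords, b <- ords].
Definition sizeR (X : R3) : nat := count (fun p => X p.1 p.2) pairs3.

Definition subR (X Y : R3) := allI (fun a => allI (fun b => if X a b then Y a b else true)).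

Fixpoint allbs (n : nat) : seq (seq bool) :=
  if n is k.+1 then [seq true :: l | l <- allbs k] ++ [seq false :: l | l <- allbs k] else [:: [::]].

Definition MsB := [seq bs <- allbs 9 | matchingb (mkR bs)].

Definition checkT_gen (ms : seq (seq bool)) : bool :=
  all (fun bY => all (fun bZ =>
    let L := [seq bX <- ms | consb (mkR bX) (mkR bY) (mkR bZ)] in
    all (fun bX => if sizeR (mkR bX) <= 1 then
       allI (fun p => allI (fun q => if mkR bX p q then true else
          has (fun bG => (sizeR (mkR bX) < sizeR (mkR bG)) && ~~ mkR bG p q) L))
       && has (fun bG => (sizeR (mkR bX) < sizeR (mkR bG)) && subR (mkR bX) (mkR bG)) L
      else true) L) ms) ms.
Definition checkT : bool := checkT_gen MsB.

Lemma checkT_ok : checkT.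
Proof. vm_compute. reflexivity. Qed.

Definition checkN_gen (ms : seq (seq bool)) : bool :=
    all (fun bX => if sizeR (mkR bX) <= 2 then
       allI (fun p => allI (fun q => if mkR bX p q then true else
          has (fun bG => (sizeR (mkR bX) < sizeR (mkR bG)) && ~~ mkR bG p q) ms))
       && has (fun bG => (sizeR (mkR bX) < sizeR (mkR bG)) && subR (mkR bX) (mkR bG)) ms
      else true) ms.
Definition checkN : bool := checkN_gen MsB.
Lemma checkN_ok : checkN.
Proof. vm_compute. reflexivity. Qed.


Lemma ordE (x : 'I_3) : x = o0 \/ x = o1 \/ x = o2.
Proof.
case: x => [[|[|[|k]]] H]; first (by left; apply: val_inj);
  first (by right; left; apply: val_inj); first (by right; right; apply: val_inj).
by [].
Qed.

Lemma in_ords (x : 'I_3) : x \in ords.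
Proof. by case: (ordE x) => [->|[->|->]]. Qed.

Lemma allIP (P : 'I_3 -> bool) : reflect (forall x, P x) (allI P).
Proof.
apply: (iffP allP) => [H x|H x _]; last exact: H.
exact: H (in_ords x).
Qed.

Lemma allbs_mem n (l : seq bool) : size l = n -> l \in allbs n.
Proof.
elim: n l => [|n IH] [|b l] //= [Hl].
by rewrite mem_cat; case: b; rewrite map_f ?orbT //; apply: IH.
Qed.

Lemma mkR_ex (X : R3) : exists2 bs, bs \in allbs 9 & X = mkR bs.
Proof.
exists [seq X p.1 p.2 | p <- pairs3]; first by apply: allbs_mem; rewrite size_map.
apply: functional_extensionality => a; apply: functional_extensionality => b.
have E := ordE.
by case: (E a) => [->|[->|->]]; case: (E b) => [->|[->|->]].
Qed.

Lemma uniq_pairs3 : uniq pairs3. Proof. vm_compute. reflexivity. Qed.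
Lemma in_pairs3 p : p \in pairs3.
Proof. case: p => a b; apply/allpairsP; exists (a, b); by rewrite !in_ords. Qed.

Lemma sizeR_card (X : R3) : sizeR X = #|[set p : 'I_3 * 'I_3 | X p.1 p.2]|.
Proof.
rewrite cardE /sizeR /enum_mem -size_filter.
have -> : [seq x <- Finite.enum ('I_3 * 'I_3)%type | mem [set p : 'I_3 * 'I_3 | X p.1 p.2] x]
   = [seq x <- Finite.enum ('I_3 * 'I_3)%type | X x.1 x.2].
  by apply: eq_filter => p; rewrite /= inE.
rewrite !size_filter; apply/seq.permP/uniq_perm; first exact: uniq_pairs3.
  by rewrite -enumT enum_uniq.
by move=> p; rewrite in_pairs3 -enumT mem_enum.
Qed.

Lemma matchingbP (X : R3) :
  (forall a b1 b2, X a b1 -> X a b2 -> b1 = b2) ->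
  (forall a b1 b2, X b1 a -> X b2 a -> b1 = b2) -> matchingb X.
Proof.
move=> H1 H2; apply/andP; split; apply/allIP => a; apply/allIP => b1; apply/allIP => b2.
  by case E1: (X a b1) => //; case E2: (X a b2) => //; rewrite (H1 _ _ _ E1 E2).
by case E1: (X b1 a) => //; case E2: (X b2 a) => //; rewrite (H2 _ _ _ E1 E2).
Qed.

Lemma matchingb_row (X : R3) : matchingb X -> forall a b1 b2, X a b1 -> X a b2 -> b1 = b2.
Proof.
case/andP => /allIP H _ a b1 b2 E1 E2.
move: (H a) => /allIP /(_ b1) /allIP /(_ b2); rewrite E1 E2; exact: eqP.
Qed.

Lemma walkbP (A B Cc : R3) :
  (forall c1 c2 c3 c4, A c1 c2 -> B c2 c3 -> Cc c3 c4 -> c1 = c4) <-> walkb A B Cc.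
Proof.
split.
  move=> H; apply/allIP => c1; apply/allIP => c2; case E1: (A c1 c2) => //.
  apply/allIP => c3; case E2: (B c2 c3) => //; apply/allIP => c4; case E3: (Cc c3 c4) => //.
  by apply/eqP; apply: H E1 E2 E3.
move=> /allIP H c1 c2 c3 c4 E1 E2 E3.
move: (H c1) => /allIP /(_ c2); rewrite E1 => /allIP /(_ c3); rewrite E2 => /allIP /(_ c4).
by rewrite E3 => /eqP.
Qed.

Lemma subRP (X Y : R3) : subR X Y -> forall a b, X a b -> Y a b.
Proof.
move=> /allIP H a b E; move: (H a) => /allIP /(_ b); by rewrite E.
Qed.

Lemma inMsB bs : bs \in MsB -> matchingb (mkR bs).
Proof. by rewrite /MsB mem_filter => /andP []. Qed.

Lemma finT (X Y Z : R3) : matchingb X -> matchingb Y -> matchingb Z -> consb X Y Z ->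
  sizeR X <= 1 ->
  (forall p q, ~~ X p q -> exists X2, [&& matchingb X2, sizeR X < sizeR X2, ~~ X2 p q & consb X2 Y Z]) /\
  (exists X2, [&& matchingb X2, sizeR X < sizeR X2, subR X X2 & consb X2 Y Z]).
Proof.
case: (mkR_ex X) => bX bX9 ->; case: (mkR_ex Y) => bY bY9 ->; case: (mkR_ex Z) => bZ bZ9 ->.
move=> mX mY mZ cX sX.
have H := checkT_ok; rewrite /checkT /checkT_gen in H.
have bYM : bY \in MsB by rewrite /MsB mem_filter; apply/andP; split; [exact mY|exact bY9].
have bZM : bZ \in MsB by rewrite /MsB mem_filter; apply/andP; split; [exact mZ|exact bZ9].
have bXM : bX \in [seq bX <- MsB | consb (mkR bX) (mkR bY) (mkR bZ)].
  rewrite mem_filter; apply/andP; split; first exact cX.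
  by rewrite /MsB mem_filter; apply/andP; split; [exact mX|exact bX9].
move: H => /allP /(_ bY bYM) /allP /(_ bZ bZM) /allP /(_ bX bXM).
case: ifP => [_|]; last by rewrite sX.
move=> /andP [H1 H2]; split.
  move=> p q nX; move: H1 => /allIP /(_ p) /allIP /(_ q).
  case: ifP => [E|_]; first by rewrite E in nX.
  case/hasP => bG; rewrite mem_filter => /andP [cG /inMsB mG] /andP [sG nG].
  by exists (mkR bG); apply/and4P; split.
case/hasP: H2 => bG; rewrite mem_filter => /andP [cG /inMsB mG] /andP [sG nG].
by exists (mkR bG); apply/and4P; split.
Qed.

Lemma finN (X : R3) : matchingb X -> sizeR X <= 2 ->
  (forall p q, ~~ X p q -> exists X2, [&& matchingb X2, sizeR X < sizeR X2 & ~~ X2 p q]) /\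
  (exists X2, [&& matchingb X2, sizeR X < sizeR X2 & subR X X2]).
Proof.
case: (mkR_ex X) => bX bX9 -> mX sX.
have H := checkN_ok; rewrite /checkN /checkN_gen in H.
have bXM : bX \in MsB by rewrite /MsB mem_filter; apply/andP; split; [exact mX|exact bX9].
move: H => /allP /(_ bX bXM).
case: ifP => [_|]; last by rewrite sX.
move=> /andP [H1 H2]; split.
  move=> p q nX; move: H1 => /allIP /(_ p) /allIP /(_ q).
  case: ifP => [E|_]; first by rewrite E in nX.
  case/hasP => bG /inMsB mG /andP [sG nG].
  by exists (mkR bG); apply/and3P; split.
case/hasP: H2 => bG /inMsB mG /andP [sG nG].
by exists (mkR bG); apply/and3P; split.
Qed.

Lemma checkS_ok : all (fun bs => sizeR (mkR bs) <= 3) MsB.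
Proof. vm_compute. reflexivity. Qed.

Lemma checkTr_ok : all (fun bs => sizeR (tr (mkR bs)) == sizeR (mkR bs)) (allbs 9).
Proof. vm_compute. reflexivity. Qed.

Lemma size3 (X : R3) : matchingb X -> sizeR X <= 3.
Proof.
case: (mkR_ex X) => bX bX9 -> mX.
have bXM : bX \in MsB by rewrite /MsB mem_filter; apply/andP; split; [exact mX|exact bX9].
exact: (allP checkS_ok _ bXM).
Qed.

Lemma sizeR_tr (X : R3) : sizeR (tr X) = sizeR X.
Proof.
case: (mkR_ex X) => bX bX9 ->.
exact/eqP/(allP checkTr_ok _ bX9).
Qed.

Lemma matchingb_col (X : R3) : matchingb X -> forall a b1 b2, X b1 a -> X b2 a -> b1 = b2.
Proof.
case/andP => _ /allIP H a b1 b2 E1 E2.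
move: (H a) => /allIP /(_ b1) /allIP /(_ b2); rewrite E1 E2; exact: eqP.
Qed.

Lemma glink_sym (V Dt : finType) (M : plane_map V Dt) : connect_sym (glink M).
Proof.
have E : glink M =2 relU (frel (alpha M)) (frel (sigma M)).
  by move=> x y; rewrite /glink /= !(eq_sym y).
move=> x y; rewrite !(eq_connect E); apply: relU_sym => a b;
  by apply: fconnect_sym; apply: perm_inj.
Qed.

Lemma frel_sym (T : finType) (f : T -> T) : injective f -> connect_sym (frel f).
Proof. by move=> injf a b; apply: fconnect_sym. Qed.

Lemma transport_rel (T : finType) (e : rel T) (e' : rel 'I_#|T|) :
  connect_sym e -> connect_sym e' ->
  (forall i j, e' i j = e (enum_val i) (enum_val j)) ->
  n_comp e T = n_comp e' 'I_#|T| /\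
  forall i j, connect e' i j = connect e (enum_val i) (enum_val j).
Proof.
move=> se se' Hee.
have cl : closed e T by [].
have sub : T \subset codom (@enum_val T T).
  by apply/subsetP => x _; apply/codomP; exists (enum_rank x); rewrite enum_rankK.
have base : rel_base (@enum_val T T) e e' [predC T] by move=> i j _; rewrite Hee.
have adj := strict_adjunction se' cl (@enum_val_inj T T) sub base.
split.
  rewrite (adjunction_n_comp enum_val se se' cl adj).
  by apply: eq_n_comp_r => i; rewrite !inE.
by case: adj => _ F i j; apply: F.
Qed.

Section Relabel.
Variables (V Dt : finType) (M : plane_map V Dt).
Local Notation n := #|V|.
Local Notation m := #|Dt|.
Local Notation hV := (@enum_val V V).
Local Notation hD := (@enum_val Dt Dt).

Definition cfun (p : {perm Dt}) (i : 'I_m) : 'I_m := enum_rank (p (enum_val i)).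
Lemma cfun_inj p : injective (cfun p).
Proof. by move=> i j /enum_rank_inj /perm_inj /enum_val_inj. Qed.
Definition cperm p : {perm 'I_m} := perm (@cfun_inj p).

Definition M' : plane_map 'I_n 'I_m :=
  PMap (cperm (alpha M)) (cperm (sigma M)) (fun i => enum_rank (vert M (enum_val i))).

Lemma alphaE i : hD (alpha M' i) = alpha M (hD i).
Proof. by rewrite /alpha /= /cperm permE /cfun enum_rankK. Qed.
Lemma sigmaE i : hD (sigma M' i) = sigma M (hD i).
Proof. by rewrite /sigma /= /cperm permE /cfun enum_rankK. Qed.
Lemma vertE i : hV (vert M' i) = vert M (hD i).
Proof. by rewrite /vert /= enum_rankK. Qed.
Lemma fpermE i : hD (fperm M' i) = fperm M (hD i).
Proof. by rewrite /fperm sigmaE alphaE. Qed.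

Lemma eq_hD i j : (i == j) = (hD i == hD j).
Proof. by rewrite (inj_eq (@enum_val_inj _ _)). Qed.
Lemma eq_hV i j : (i == j) = (hV i == hV j).
Proof. by rewrite (inj_eq (@enum_val_inj _ _)). Qed.

Lemma adjE i j : adj M' i j = adj M (hV i) (hV j).
Proof.
apply/existsP/existsP => [[d /andP [/eqP <- /eqP <-]] | [d /andP [/eqP E1 /eqP E2]]].
  by exists (hD d); rewrite !vertE alphaE !eqxx.
exists (enum_rank d); rewrite !eq_hV !vertE alphaE !enum_rankK E1 E2.
by rewrite !eqxx.
Qed.

Lemma fperm_inj : injective (fperm M).
Proof. by move=> x y /perm_inj /perm_inj. Qed.
Lemma fperm'_inj : injective (fperm M').
Proof. by move=> x y /perm_inj /perm_inj. Qed.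

Lemma tr_sigma :
  n_comp (frel (sigma M)) Dt = n_comp (frel (sigma M')) 'I_m /\
  forall i j, fconnect (sigma M') i j = fconnect (sigma M) (hD i) (hD j).
Proof.
apply: (@transport_rel _ (frel (sigma M)) (frel (sigma M'))).
- apply: frel_sym; exact: perm_inj.
- apply: frel_sym; exact: perm_inj.
by move=> i j; rewrite /frel /= eq_hD sigmaE.
Qed.

Lemma tr_fperm :
  n_comp (frel (fperm M)) Dt = n_comp (frel (fperm M')) 'I_m /\
  forall i j, fconnect (fperm M') i j = fconnect (fperm M) (hD i) (hD j).
Proof.
apply: (@transport_rel _ (frel (fperm M)) (frel (fperm M'))).
- apply: frel_sym; exact: fperm_inj.
- apply: frel_sym; exact: fperm'_inj.
by move=> i j; rewrite /frel /= eq_hD fpermE.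
Qed.

Lemma tr_glink : n_comp (glink M) Dt = n_comp (glink M') 'I_m.
Proof.
apply: (proj1 (transport_rel (glink_sym M) (glink_sym M') _)).
by move=> i j; rewrite /glink !eq_hD alphaE sigmaE.
Qed.

Lemma plane_tr : is_plane_graph M -> is_plane_graph M'.
Proof.
case=> A1 A2 A3 A4 [A5 A6 A7]; split.
- by move=> d; apply: enum_val_inj; rewrite !alphaE A1.
- by move=> d; rewrite eq_hD alphaE A2.
- by move=> d; apply: enum_val_inj; rewrite !vertE sigmaE A3.
- move=> d d' E; rewrite (proj2 tr_sigma); apply: A4.
  by rewrite -!vertE E.
split.
- by move=> d; rewrite eq_hV !vertE alphaE A5.
- move=> d d' E1 E2; apply: enum_val_inj; apply: A6.
    by rewrite -!vertE E1.
  by rewrite -!alphaE -!vertE E2.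
- by rewrite card_ord -(proj1 tr_sigma) -(proj1 tr_fperm) -tr_glink.
Qed.
End Relabel.

Lemma imset2E (T T' : finType) (f : T -> T') a b : f @: [set a; b] = [set f a; f b].
Proof. by rewrite imsetU1 imset_set1. Qed.

Lemma zip_map2 (T T' : Type) (f : T -> T') (s t : seq T) :
  zip (map f s) (map f t) = map (fun p => (f p.1, f p.2)) (zip s t).
Proof. by elim: s t => [|x s IH] [|y t] //=; rewrite IH. Qed.

Lemma pairset_tr (T : finType) (P : {pred T * T}) (P' : {pred 'I_#|T| * 'I_#|T|}) :
  (forall p, (p \in P') = ((enum_val p.1, enum_val p.2) \in P)) ->
  #|[set [set p.1; p.2] | p in P']| = #|[set [set p.1; p.2] | p in P]|.
Proof.
move=> HP; rewrite -(card_imset _ (imset_inj (@enum_val_inj T T))).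
apply: eq_card => A; apply/imsetP/imsetP.
  case=> B /imsetP [p Pp ->] ->; exists (enum_val p.1, enum_val p.2); first by rewrite -HP.
  by rewrite imset2E.
case=> [[a b]] Pp ->; exists [set enum_rank a; enum_rank b].
  by apply/imsetP; exists (enum_rank a, enum_rank b) => //; rewrite HP /= !enum_rankK.
by rewrite imset2E !enum_rankK.
Qed.

Section Relabel2.
Variables (V Dt : finType) (M : plane_map V Dt).
Local Notation n := #|V|.
Local Notation m := #|Dt|.
Local Notation hV := (@enum_val V V).
Local Notation hD := (@enum_val Dt Dt).
Local Notation M' := (M' M).

Lemma face_tr D : face_verts M' (enum_rank D) = enum_rank @: face_verts M D.
Proof.
apply/setP => i; apply/imsetP/imsetP.
  case=> x Hx ->; exists (vert M (hD x)).
    apply/imsetP; exists (hD x) => //.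
    by move: Hx; rewrite !inE (proj2 (tr_fperm M)) enum_rankK.
  by rewrite /vert.
case=> y /imsetP [x Hx ->] ->; exists (enum_rank x).
  by rewrite !inE (proj2 (tr_fperm M)) !enum_rankK.
by rewrite /vert /= enum_rankK.
Qed.

Lemma cyc_tr s : is_graph_cycle (adj M') s = is_graph_cycle (adj M) (map hV s).
Proof.
rewrite /is_graph_cycle size_map (map_inj_uniq (@enum_val_inj _ _)) cycle_map.
by rewrite (@eq_cycle _ _ (relpre hV (adj M))) // => i j; rewrite adjE.
Qed.

Lemma ce_tr s : cycle_edges (map hV s) = (fun A : {set 'I_n} => hV @: A) @: cycle_edges s.
Proof.
rewrite /cycle_edges -map_rot zip_map2.
apply/setP => A; apply/imsetP/imsetP.
  case=> p /mapP [q Hq ->] ->; exists [set q.1; q.2]; last by rewrite imset2E.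
  by apply/imsetP; exists q.
by case=> B /imsetP [q Hq ->] ->; exists (hV q.1, hV q.2); [apply: map_f | rewrite imset2E].
Qed.

Lemma noadj_tr : no_adjacent_short_cycles (adj M) -> no_adjacent_short_cycles (adj M').
Proof.
move=> H s1 s2 c1 c2 z1 z2 ne.
have HI : injective (fun AA : {set {set 'I_n}} => (fun A : {set 'I_n} => hV @: A) @: AA).
  exact/imset_inj/imset_inj/enum_val_inj.
have := H (map hV s1) (map hV s2); rewrite -!cyc_tr !size_map !ce_tr (inj_eq HI).
move=> /(_ c1 c2 z1 z2 ne) E; apply/setP => A; rewrite in_set0.
apply/negbTE/negP; rewrite inE => /andP [A1 A2].
have : hV @: A \in ((fun A : {set 'I_n} => hV @: A) @: cycle_edges s1) :&: ((fun A : {set 'I_n} => hV @: A) @: cycle_edges s2).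
  have HA : injective (fun A : {set 'I_n} => hV @: A) by exact/imset_inj/enum_val_inj.
  by rewrite inE !(mem_imset _ _ HA) A1 A2.
by rewrite E inE.
Qed.
End Relabel2.

Lemma inS' (V : finType) (S : {set V}) (i : 'I_#|V|) :
  (i \in enum_rank @: S) = (enum_val i \in S).
Proof. by rewrite -{1}(enum_valK i) mem_imset //; exact: enum_rank_inj. Qed.

Lemma cx_transport (V Dt : finType) (M : plane_map V Dt) (S : {set V}) (C : corr V) phi0 :
  counterexample M S C phi0 ->
  counterexample (M' M) (enum_rank @: S) (fun i j => C (enum_val i) (enum_val j)) (phi0 \o enum_val) /\
  cx_vertices (M' M) = cx_vertices M /\ cx_edges (M' M) (enum_rank @: S) = cx_edges M S /\
  corr_weight (adj (M' M)) (fun i j => C (enum_val i) (enum_val j)) = corr_weight (adj M) C.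
Proof.
case=> [[pl na cS Sf] [ca ct col ne]]; split; [split; split|split; [|split]].
- exact: plane_tr.
- exact: noadj_tr.
- by rewrite card_imset //; exact: enum_rank_inj.
- case: Sf => [[v ->]|[d ->]]; [left; exists (enum_rank v) | right; exists (enum_rank d)].
    by rewrite imset_set1.
  by rewrite face_tr.
- by case: ca => ca1 ca2; split => [u v c c'|u v c c1 c2]; [apply: ca1 | apply: ca2].
- by move=> v1 v2 v3 c1 c2 c3 c4; rewrite !adjE; apply: ct.
- move=> i j Hi Hj Hij; apply: col.
  + by move: Hi; rewrite inS'.
  + by move: Hj; rewrite inS'.
  + by rewrite -adjE.
- case=> phi' [Hc He]; apply: ne; exists (phi' \o enum_rank); split.
    move=> x y _ _ Hxy; have := Hc (enum_rank x) (enum_rank y) isT isT.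
    by rewrite adjE !enum_rankK; apply.
  by move=> u Hu /=; rewrite He ?inS' /= enum_rankK.
- by rewrite /cx_vertices card_ord.
- rewrite /cx_edges /edge_set /induced_edge_set; congr (_ - _); apply: pairset_tr => p.
    by rewrite !inE adjE.
  by rewrite !inE adjE !inS'.
- rewrite /corr_weight; congr (_ %/ 2).
  rewrite (reindex (fun p : 'I_#|V| * 'I_#|V| => (enum_val p.1, enum_val p.2))) /=.
    by apply: eq_big => p; rewrite ?adjE.
  exists (fun p : V * V => (enum_rank p.1, enum_rank p.2)) => [[a b] _|[a b] _] /=.
    by rewrite !enum_valK.
  by rewrite !enum_rankK.
Qed.

Section Basic.
Variables (V Dt : finType) (M : plane_map V Dt).
Hypothesis pl : is_plane_graph M.

Lemma adj_irr x : ~~ adj M x x.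
Proof.
case: pl => _ _ _ _ [A5 _ _]; apply/existsP => [[d /andP [/eqP E1 /eqP E2]]].
by move: (A5 d); rewrite E1 E2 eqxx.
Qed.

Lemma adj_sym x y : adj M x y -> adj M y x.
Proof.
case: pl => A1 _ _ _ _; case/existsP => d /andP [E1 E2]; apply/existsP; exists (alpha M d).
by rewrite A1 E1 E2.
Qed.

Lemma adj_neq x y : adj M x y -> x != y.
Proof. by apply: contraTneq => ->; apply: adj_irr. Qed.
End Basic.

Definition C2 (V : finType) (u v : V) (X2 : R3) (C : corr V) : corr V :=
  fun x y => if (x == u) && (y == v) then X2 else if (x == v) && (y == u) then tr X2 else C x y.

Definition isuv (V : finType) (u v x y : V) := ((x == u) && (y == v)) || ((x == v) && (y == u)).

Lemma C2_uv (V : finType) (u v : V) X2 C : C2 u v X2 C u v = X2.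
Proof. by rewrite /C2 !eqxx. Qed.

Lemma C2_vu (V : finType) (u v : V) X2 C : u != v -> C2 u v X2 C v u = tr X2.
Proof. by move=> nuv; rewrite /C2 eq_sym (negbTE nuv) /= !eqxx. Qed.

Lemma C2_eq (V : finType) (u v : V) X2 C x y : ~~ isuv u v x y -> C2 u v X2 C x y = C x y.
Proof. by rewrite /C2 /isuv negb_or => /andP [/negbTE -> /negbTE ->]. Qed.

Lemma Csym (V : finType) (C : corr V) : is_corr_assignment C -> forall x y, C x y = tr (C y x).
Proof.
case=> ca1 _ x y; apply: functional_extensionality => c; apply: functional_extensionality => c'.
by rewrite /tr ca1.
Qed.

Lemma C_matching (V : finType) (C : corr V) : is_corr_assignment C -> forall x y, matchingb (C x y).
Proof.
move=> [ca1 ca2] x y; apply: matchingbP => [a b1 b2|a b1 b2]; first exact: ca2.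
by rewrite ca1 => E1; rewrite ca1 => E2; apply: ca2 E1 E2.
Qed.

Lemma isuvP (V : finType) (u v x y : V) : isuv u v x y -> (x = u /\ y = v) \/ (x = v /\ y = u).
Proof. by case/orP => /andP [/eqP -> /eqP ->]; [left|right]. Qed.

Lemma isuvC (V : finType) (u v x y : V) : isuv u v y x = isuv u v x y.
Proof. by rewrite /isuv orbC andbC [(y == u) && _]andbC. Qed.

Section Improve.
Variables (V Dt : finType) (M : plane_map V Dt) (S : {set V}) (C : corr V) (phi0 : V -> 'I_3).
Variables (u v : V) (X2 : R3).
Hypothesis pl : is_plane_graph M.
Hypothesis ca : is_corr_assignment C.
Hypothesis huv : adj M u v.
Hypothesis mX : matchingb X2.

Local Notation C2 := (C2 u v X2 C).

Lemma nuv : u != v. Proof. exact (adj_neq pl huv). Qed.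

Lemma ca2 : is_corr_assignment C2.
Proof.
case: ca => ca1 ca2; split.
  move=> x y c c'; case H: (isuv u v x y).
    by case: (isuvP H) => [[-> ->]|[-> ->]]; rewrite C2_uv C2_vu ?nuv.
  have H' : ~~ isuv u v y x by rewrite isuvC H.
  by rewrite !C2_eq ?H ?H' //; apply: ca1.
move=> x y c c1 c2; case H: (isuv u v x y).
  case: (isuvP H) => [[-> ->]|[-> ->]]; rewrite ?C2_uv ?C2_vu ?nuv //.
    exact: matchingb_row.
  by rewrite /tr; apply: matchingb_col.
by rewrite !C2_eq ?H //; apply: ca2.
Qed.

Lemma weight_lt : sizeR (C u v) < sizeR X2 ->
  corr_weight (adj M) C < corr_weight (adj M) C2.
Proof.
move=> sz.
have hvu := adj_sym pl huv.
have nvu : (v, u) != (u, v) by rewrite xpair_eqE negb_and eq_sym nuv.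
have E : forall p : V * V, p != (u, v) -> p != (v, u) -> corr_size C2 p.1 p.2 = corr_size C p.1 p.2.
  move=> [x y] /= H1 H2; rewrite /corr_size C2_eq //.
  by rewrite /isuv negb_or -!xpair_eqE H1 H2.
have S1 : corr_size C2 u v = sizeR X2 by rewrite /corr_size C2_uv sizeR_card.
have S2 : corr_size C2 v u = sizeR X2 by rewrite /corr_size C2_vu ?nuv // -sizeR_card sizeR_tr.
have S3 : corr_size C u v = sizeR (C u v) by rewrite sizeR_card.
have S4 : corr_size C v u = sizeR (C u v) by rewrite /corr_size (Csym ca v u) -sizeR_card sizeR_tr.
rewrite /corr_weight (bigD1 (u, v)) //= [X in _ < X %/ 2](bigD1 (u, v)) //=.
rewrite (bigD1 (v, u)) /=; last by rewrite hvu nvu.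
rewrite [X in _ < (_ + X) %/ 2](bigD1 (v, u)) /=; last by rewrite hvu nvu.
rewrite (eq_bigr (fun p => corr_size C2 p.1 p.2)); last first.
  by move=> p /andP [/andP [_ H1] H2]; rewrite E.
rewrite S1 S2 S3 S4.
set r := \sum_(i | _) _.
lia.
Qed.
End Improve.

Lemma improve (V Dt : finType) (M : plane_map V Dt) (S : {set V}) (C : corr V) (phi0 : V -> 'I_3)
    (u v : V) (X2 : R3) :
  counterexample M S C phi0 -> adj M u v -> matchingb X2 -> sizeR (C u v) < sizeR X2 ->
  ((u \in S) && (v \in S) && ~~ X2 (phi0 u) (phi0 v)) || (~~ ((u \in S) && (v \in S)) && subR (C u v) X2) ->
  consistent_on_triangles (adj M) (C2 u v X2 C) ->
  counterexample M S (C2 u v X2 C) phi0 /\ corr_weight (adj M) C < corr_weight (adj M) (C2 u v X2 C).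
Proof.
case=> [[pl na cS Sf] [ca ct col ne]] huv mX sz cond ct2.
have nuv' := nuv pl huv.
split; last exact: (weight_lt pl ca huv mX sz).
split; split => //.
- exact: (ca2 pl ca huv mX).
- move=> x y Hx Hy Hxy; case H: (isuv u v x y); last by rewrite C2_eq ?H //; apply: col.
  case: (isuvP H) => [[Ex Ey]|[Ex Ey]]; subst x y.
    rewrite C2_uv.
    case/orP: cond => [/andP [_ nX] | /andP [nS _]]; first exact nX.
    by move: nS; rewrite Hx Hy.
  rewrite C2_vu // /tr.
  case/orP: cond => [/andP [_ nX] | /andP [nS _]]; first exact nX.
  by move: nS; rewrite Hx Hy.
- case=> phi [Hc He]; apply: ne; exists phi; split => // x y _ _ Hxy.
  have := Hc x y isT isT Hxy.
  case H: (isuv u v x y); last by rewrite C2_eq ?H.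
  case: ca => ca1 _.
  case: (isuvP H) => [[Ex Ey]|[Ex Ey]]; subst x y.
    rewrite C2_uv.
    case/orP: cond => [/andP [/andP [uS vS] nX] | /andP [_ sub]] => _.
      by rewrite !He //; apply: col.
    apply/negP => Cuv; move/negP: (Hc u v isT isT huv); apply.
    by rewrite C2_uv; apply: subRP sub _ _ Cuv.
  rewrite C2_vu // /tr ca1.
  case/orP: cond => [/andP [/andP [uS vS] nX] | /andP [_ sub]] => H2.
    by rewrite !He //; apply: col.
  apply/negP => Cuv; move/negP: H2; apply; exact: subRP sub _ _ Cuv.
Qed.

Lemma cons_NT (V Dt : finType) (M : plane_map V Dt) (C : corr V) (u v : V) (X2 : R3) :
  is_plane_graph M -> consistent_on_triangles (adj M) C ->
  ~ (exists w, adj M u w && adj M v w) ->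
  consistent_on_triangles (adj M) (C2 u v X2 C).
Proof.
move=> pl ct nw v1 v2 v3 c1 c2 c3 c4 h12 h23 h31.
have key : forall x y z, adj M x y -> adj M y z -> adj M z x -> ~~ isuv u v x y.
  move=> x y z hxy hyz hzx; apply/negP => /isuvP [[Ex Ey]|[Ex Ey]]; subst x y; apply: nw; exists z.
    by rewrite (adj_sym pl hzx) hyz.
  by rewrite (adj_sym pl hzx) hyz.
rewrite (C2_eq _ _ (key _ _ _ h12 h23 h31)) (C2_eq _ _ (key _ _ _ h23 h31 h12)).
rewrite (C2_eq _ _ (key _ _ _ h31 h12 h23)).
exact: ct.
Qed.

Lemma tri_uniq (V Dt : finType) (M : plane_map V Dt) (u v w w' : V) :
  is_plane_graph M -> no_adjacent_short_cycles (adj M) -> adj M u v ->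
  adj M u w -> adj M v w -> adj M u w' -> adj M v w' -> w' = w.
Proof.
move=> pl na huv huw hvw huw' hvw'.
case: (eqVneq w' w) => // nww.
have nuv := adj_neq pl huv; have nuw := adj_neq pl huw; have nvw := adj_neq pl hvw.
have nuw' := adj_neq pl huw'; have nvw' := adj_neq pl hvw'.
have cyc : forall z, adj M u z -> adj M v z -> u != z -> v != z -> is_graph_cycle (adj M) [:: u; v; z].
  move=> z huz hvz nuz nvz; rewrite /is_graph_cycle /= !inE negb_or nuv nuz nvz /=.
  by rewrite huv hvz (adj_sym pl huz).
have ce : forall z, cycle_edges [:: u; v; z] = [set [set u; v]; [set v; z]; [set z; u]].
  move=> z; apply/setP => A; rewrite /cycle_edges !inE; apply/imsetP/idP.
    by case=> p; rewrite !inE => /or3P [] /eqP -> ->; rewrite eqxx ?orbT.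
  by case/orP => [/orP [] |] /eqP ->; [exists (u, v) | exists (v, z) | exists (z, u)]; rewrite ?inE ?eqxx ?orbT.
have := na _ _ (cyc _ huw hvw nuw nvw) (cyc _ huw' hvw' nuw' nvw') isT isT.
have ne : cycle_edges [:: u; v; w] != cycle_edges [:: u; v; w'].
  rewrite !ce; apply/negP => /eqP E.
  have : [set v; w] \in [set [set u; v]; [set v; w']; [set w'; u]] by rewrite -E !inE eqxx orbT.
  rewrite !inE => /orP [/orP [] |] /eqP /setP E2.
  - by move: (E2 w); rewrite !inE eqxx (eq_sym w u) (negbTE nuw) (eq_sym w v) (negbTE nvw).
  - have nww' : (w == w') = false by rewrite eq_sym (negbTE nww).
    by move: (E2 w); rewrite !inE eqxx (eq_sym w v) (negbTE nvw) nww'.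
  - by move: (E2 v); rewrite !inE eqxx (negbTE nvw') (eq_sym v u) (negbTE nuv).
move=> /(_ ne) /setP /(_ [set u; v]).
by rewrite !ce !inE eqxx.
Qed.

Lemma cons_T (V Dt : finType) (M : plane_map V Dt) (C : corr V) (u v w : V) (X2 : R3) :
  is_plane_graph M -> no_adjacent_short_cycles (adj M) -> is_corr_assignment C ->
  consistent_on_triangles (adj M) C ->
  adj M u v -> adj M u w -> adj M v w -> consb X2 (C v w) (C w u) ->
  consistent_on_triangles (adj M) (C2 u v X2 C).
Proof.
move=> pl na ca ct huv huw hvw cb v1 v2 v3 c1 c2 c3 c4 h12 h23 h31.
have nuw := adj_neq pl huw; have nvw := adj_neq pl hvw.
have uq : forall z, adj M u z -> adj M v z -> z = w.
  by move=> z a b; apply: (tri_uniq pl na huv huw hvw a b).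
have nwR : forall x, ~~ isuv u v x w.
  by move=> x; rewrite /isuv !(eq_sym w) (negbTE nuw) (negbTE nvw) !andbF.
have nwL : forall x, ~~ isuv u v w x.
  by move=> x; rewrite /isuv !(eq_sym w) (negbTE nuw) (negbTE nvw).
have nuv := adj_neq pl huv.
case: ca => ca1 _.
move: cb => /and5P [W1 W2 W3 W4 /andP [W5 W6]].
case H1: (isuv u v v1 v2).
  case: (isuvP H1) => [[E1 E2]|[E1 E2]]; subst v1 v2.
    have E3 := uq v3 (adj_sym pl h31) h23; subst v3.
    rewrite C2_uv (C2_eq _ _ (nwR _)) (C2_eq _ _ (nwL _)) => e1 e2 e3.
    exact: ((walkbP _ _ _).2 W1 _ _ _ _ e1 e2 e3).
  have E3 := uq v3 h23 (adj_sym pl h31); subst v3.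
  rewrite C2_vu // (C2_eq _ _ (nwR _)) (C2_eq _ _ (nwL _)) => e1 e2 e3.
  rewrite ca1 in e2; rewrite ca1 in e3.
  exact: ((walkbP _ _ _).2 W6 _ _ _ _ e1 e2 e3).
case H2: (isuv u v v2 v3).
  case: (isuvP H2) => [[E1 E2]|[E1 E2]]; subst v2 v3.
    have E3 := uq v1 (adj_sym pl h12) h31; subst v1.
    rewrite C2_uv (C2_eq _ _ (nwR _)) (C2_eq _ _ (nwL _)) => e1 e2 e3.
    exact: ((walkbP _ _ _).2 W3 _ _ _ _ e1 e2 e3).
  have E3 := uq v1 h31 (adj_sym pl h12); subst v1.
  rewrite C2_vu // (C2_eq _ _ (nwR _)) (C2_eq _ _ (nwL _)) => e1 e2 e3.
  rewrite ca1 in e1; rewrite ca1 in e3.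
  exact: ((walkbP _ _ _).2 W5 _ _ _ _ e1 e2 e3).
case H3: (isuv u v v3 v1).
  case: (isuvP H3) => [[E1 E2]|[E1 E2]]; subst v3 v1.
    have E3 := uq v2 (adj_sym pl h23) h12; subst v2.
    rewrite C2_uv (C2_eq _ _ (nwR _)) (C2_eq _ _ (nwL _)) => e1 e2 e3.
    exact: ((walkbP _ _ _).2 W2 _ _ _ _ e1 e2 e3).
  have E3 := uq v2 h12 (adj_sym pl h23); subst v2.
  rewrite C2_vu // (C2_eq _ _ (nwR _)) (C2_eq _ _ (nwL _)) => e1 e2 e3.
  rewrite ca1 in e1; rewrite ca1 in e2.
  exact: ((walkbP _ _ _).2 W4 _ _ _ _ e1 e2 e3).
rewrite !C2_eq ?H1 ?H2 ?H3 //; exact: ct.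
Qed.

Lemma walk_C (V : finType) (g : rel V) (C : corr V) :
  consistent_on_triangles g C -> forall x y z, g x y -> g y z -> g z x -> walkb (C x y) (C y z) (C z x).
Proof. by move=> ct x y z hxy hyz hzx; apply/walkbP => c1 c2 c3 c4; apply: ct. Qed.

Lemma cons_of (V Dt : finType) (M : plane_map V Dt) (C : corr V) (u v w : V) :
  is_plane_graph M -> is_corr_assignment C -> consistent_on_triangles (adj M) C ->
  adj M u v -> adj M u w -> adj M v w -> consb (C u v) (C v w) (C w u).
Proof.
move=> pl ca ct huv huw hvw.
have hwu := adj_sym pl huw; have hvu := adj_sym pl huv; have hwv := adj_sym pl hvw.
rewrite /consb -(Csym ca u w) -(Csym ca w v) -(Csym ca v u).
by rewrite !(walk_C ct).
Qed.

Theorem mainTheorem5 (V Dt : finType) (M : plane_map V Dt) (S : {set V})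
    (C : corr V) (phi0 : V -> 'I_3) (D : Dt) :
  minimal_counterexample M S C phi0 ->
  S = face_verts M D ->
  forall u v : V, adj M u v -> [set u; v] \notin face_edges M D ->
    2 <= corr_size C u v /\
    ((~ exists w, adj M u w && adj M v w) -> corr_size C u v = 3).
Proof.
move=> [cx min] _ u v huv _.
have [[pl na cS Sf] [ca ct col ne]] := cx.
have mX := C_matching ca u v.
have sX : corr_size C u v = sizeR (C u v) by rewrite sizeR_card.
have contra : forall X2, matchingb X2 -> sizeR (C u v) < sizeR X2 ->
    ((u \in S) && (v \in S) && ~~ X2 (phi0 u) (phi0 v)) ||
    (~~ ((u \in S) && (v \in S)) && subR (C u v) X2) ->
    consistent_on_triangles (adj M) (C2 u v X2 C) -> False.
  move=> X2 m2 s2 cd ct2.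
  have [cx2 wlt] := improve cx huv m2 s2 cd ct2.
  have [cx' [ev [ee ew]]] := cx_transport cx2.
  apply: (min _ _ _ _ _ _ cx'); rewrite /cx_better; right; split => //; right; split => //.
  by rewrite ew.
have fin : forall (P : R3 -> Prop),
    (forall X2, P X2 -> consistent_on_triangles (adj M) (C2 u v X2 C)) ->
    (forall p q, ~~ C u v p q -> exists X2, [&& matchingb X2, sizeR (C u v) < sizeR X2 & ~~ X2 p q] /\ P X2) ->
    (exists X2, [&& matchingb X2, sizeR (C u v) < sizeR X2 & subR (C u v) X2] /\ P X2) -> False.
  move=> P HP F1 F2.
  case Hb: ((u \in S) && (v \in S)).
    move/andP: (Hb) => [uS vS].
    have nX : ~~ C u v (phi0 u) (phi0 v) by apply: col.
    case: (F1 _ _ nX) => X2 [/and3P [m2 s2 n2] P2].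
    by apply: (contra X2 m2 s2); [rewrite Hb n2 | exact: HP].
  case: F2 => X2 [/and3P [m2 s2 sb] P2].
  by apply: (contra X2 m2 s2); [rewrite Hb sb orbT | exact: HP].
have finNT : ~ (exists w, adj M u w && adj M v w) -> sizeR (C u v) <= 2 -> False.
  move=> nw sz; have [F1 F2] := finN mX sz.
  apply: (fin (fun _ => True)) => [X2 _ | p q nX | ]; first exact: cons_NT.
    by case: (F1 p q nX) => X2 H; exists X2.
  by case: F2 => X2 H; exists X2.
split.
  rewrite sX leqNgt; apply/negP => sz1.
  case: (boolP [exists w, adj M u w && adj M v w]) => [/existsP [w /andP [huw hvw]] | nw].
    have cb := cons_of pl ca ct huv huw hvw.
    have [F1 F2] := finT mX (C_matching ca v w) (C_matching ca w u) cb sz1.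
    apply: (fin (fun X2 => consb X2 (C v w) (C w u))) => [X2 c2 | p q nX |].
    - exact: (cons_T pl na ca ct huv huw hvw c2).
    - by case: (F1 p q nX) => X2 /and4P [m2 s2 n2 c2]; exists X2; rewrite m2 s2 n2.
    - by case: F2 => X2 /and4P [m2 s2 sb c2]; exists X2; rewrite m2 s2 sb.
  apply: finNT; last exact: ltnW.
  by case=> w Hw; move/existsP: nw; apply; exists w.
move=> nw; apply/eqP; rewrite sX eqn_leq size3 //=.
rewrite leqNgt; apply/negP => sz2.
exact: finNT nw sz2.
Qed.
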